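(* The matroid $V_{10}/5\setminus 7$ has the half-plane property; equivalently, the polynomial $\frac{\partial f_{10}}{\partial x_5}\big|_{x_7=0}$ is stable.
   Context: $V_{10}$ is the matroid on $\{1,\dots,10\}$ whose bases are all $4$-element subsets of $\{1,\dots,10\}$ except $\{1,2,3,4\},\{1,2,5,6\},\{1,2,7,8\},\{1,2,9,10\},\{3,4,5,6\},\{5,6,7,8\},\{7,8,9,10\}$, and $f_{10}=\sum_{B}\prod_{i\in B}x_i$ (sum over bases $B$ of $V_{10}$) is its basis generating polynomial. For a matroid $M$ and element $e$, the deletion $M\setminus e$ has as bases the bases of $M$ not containing $e$ (basis generating polynomial: set $x_e=0$), and the contraction $M/e$ has as bases the sets $B\setminus\{e\}$ for bases $B$ of $M$ containing $e$ (basis generating polynomial: $\partial/\partial x_e$). $V_{10}/5\setminus 7$ means $(V_{10}/5)\setminus 7$. A homogeneous real polynomial $f$ is stable if for all vectors $v$ with all entries positive and all real vectors $w$, $f(tv+w)\in\mathbb{R}[t]$ has only real roots; a matroid has the half-plane property if its basis generating polynomial is stable. *)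

(* Defs.v *)
From HB Require Import structures.
From mathcomp Require Import all_boot all_order all_algebra.
From mathcomp Require Import mpoly.
From mathcomp Require Import complex.
Import ComplexField.
From mathcomp Require Import reals.
Set Implicit Arguments. Unset Strict Implicit. Unset Printing Implicit Defensive.
Import Order.TTheory GRing.Theory Num.Theory.
Local Open Scope ring_scope.

(* Elements 1..10 of the paper are the ordinals 0..9 of 'I_10: element k is (inord (k-1)). *)
Definition el (k : nat) : 'I_10 := inord k.-1.

(* A matroid is represented by its set of bases. *)
Definition non_bases_V10 : seq {set 'I_10} :=
  [:: [set el 1; el 2; el 3; el 4]; [set el 1; el 2; el 5; el 6];
      [set el 1; el 2; el 7; el 8]; [set el 1; el 2; el 9; el 10];
      [set el 3; el 4; el 5; el 6]; [set el 5; el 6; el 7; el 8];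
      [set el 7; el 8; el 9; el 10]].

Definition V10 : {set {set 'I_10}} :=
  [set B : {set 'I_10} | (#|B| == 4)%N & B \notin non_bases_V10].

Definition contract (M : {set {set 'I_10}}) (e : 'I_10) : {set {set 'I_10}} :=
  [set B :\ e | B in M & e \in B].

Definition delete (M : {set {set 'I_10}}) (e : 'I_10) : {set {set 'I_10}} :=
  [set B in M | e \notin B].

Definition bgp (R : comNzRingType) (M : {set {set 'I_10}}) : {mpoly R[10]} :=
  \sum_(B in M) \prod_(i in B) 'X_i.

(* f(t v + w) as a univariate polynomial in t *)
Definition line_restr (R : comNzRingType) (f : {mpoly R[10]}) (v w : 'I_10 -> R)
  : {poly R} :=
  (map_mpoly (polyC) f).@[fun i => 'X * (v i)%:P + (w i)%:P].

Definition real_rooted (R : rcfType) (p : {poly R}) : Prop :=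
  forall z : R[i], root (map_poly (real_complex R) p) z -> complex.Im z = 0.

Definition stable (R : rcfType) (f : {mpoly R[10]}) : Prop :=
  forall v w : 'I_10 -> R, (forall i, 0 < v i) -> real_rooted (line_restr f v w).

Definition half_plane_property (R : realType) (M : {set {set 'I_10}}) : Prop :=
  stable (bgp R M).

(* Main.v *)
Require Import Defs.
From HB Require Import structures.
From mathcomp Require Import all_boot all_order all_algebra all_field.
From mathcomp Require Import mpoly complex reals.
From mathcomp Require Import zify ring lra.
Import ComplexField.
Set Implicit Arguments. Unset Strict Implicit. Unset Printing Implicit Defensive.
Import Order.TTheory GRing.Theory Num.Theory.
Local Open Scope ring_scope.

Lemma mevalXmap (S T : comNzRingType) (f : {rmorphism S -> T}) (xi : 'I_10 -> T) i :
  (map_mpoly f 'X_i).@[xi] = xi i.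
Proof. by rewrite map_mpolyX mevalXU. Qed.

Lemma line_bgp (R : rcfType) (M : {set {set 'I_10}}) (v w : 'I_10 -> R) (z : R[i]) :
 (map_poly (real_complex R) (line_restr (bgp R M) v w)).[z] =
   \sum_(B in M) \prod_(i in B) (z * real_complex R (v i) + real_complex R (w i)).
Proof.
rewrite /line_restr /bgp.
rewrite (rmorph_sum (map_mpoly polyC)).
rewrite (rmorph_sum (meval _)).
rewrite (rmorph_sum (map_poly _)) horner_sum; apply: eq_bigr => B _.
rewrite (rmorph_prod (map_mpoly polyC)) (rmorph_prod (meval _)).
rewrite (rmorph_prod (map_poly _)) horner_prod; apply: eq_bigr => i _.
transitivity ((map_poly (real_complex R) ('X * (v i)%:P + (w i)%:P)).[z]).
  by congr (horner (map_poly _ _) _); apply: mevalXmap.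
rewrite rmorphD rmorphM /= map_polyX !map_polyC /= hornerD hornerM hornerX !hornerC.
by [].
Qed.

Lemma Im_line (R : rcfType) (z : R[i]) (a b : R) :
  complex.Im (z * real_complex R a + real_complex R b) = complex.Im z * a.
Proof. by case: z => x y /=; ring. Qed.

Lemma conj_line (R : rcfType) (z : R[i]) (a b : R) :
  (@conjc R) (z * real_complex R a + real_complex R b) = (@conjc R) z * real_complex R a + real_complex R b.
Proof. by case: z => x y /=; congr Complex; ring. Qed.

Lemma hpp_of_nonvanish (R : realType) (M : {set {set 'I_10}}) :
  (forall xi : 'I_10 -> R[i], (forall i, 0 < complex.Im (xi i)) ->
      \sum_(B in M) \prod_(i in B) xi i != 0) ->
  half_plane_property R M.
Proof.
move=> H v w vpos z; rewrite /root line_bgp => /eqP Hz.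
have [Hlt|Hgt|//] := ltgtP (complex.Im z) 0.
- have := H (fun i => (@conjc R) z * real_complex R (v i) + real_complex R (w i)).
  have -> : \sum_(B in M) \prod_(i in B) ((@conjc R) z * real_complex R (v i) + real_complex R (w i))
      = (@conjc R) (\sum_(B in M) \prod_(i in B) (z * real_complex R (v i) + real_complex R (w i))).
    rewrite rmorph_sum; apply: eq_bigr => B _; rewrite rmorph_prod; apply: eq_bigr => i _.
    by symmetry; apply: conj_line.
  rewrite Hz conjc0 eqxx => /(_ _)/negP; case=> // i.
  rewrite Im_line; case: z Hlt {Hz} => x y /= Hy; rewrite mulr_gt0 // ?oppr_gt0 //.
- have := H (fun i => z * real_complex R (v i) + real_complex R (w i)).
  rewrite Hz eqxx => /(_ _)/negP; case=> // i.
  by rewrite Im_line mulr_gt0.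
Qed.

Section Subsets.
Variables (T : finType) (C : comNzRingType) (F : T -> C).

Definition ssum (A : {set T}) k :=
  \sum_(X : {set T} | (X \subset A) && (#|X| == k)) \prod_(i in X) F i.

Lemma ssum0 (A : {set T}) : ssum A 0 = 1.
Proof.
rewrite /ssum (bigD1 set0) ?sub0set ?cards0 //= big_set0 big1 ?addr0 //.
by move=> X /andP[/andP[_ /eqP/cards0_eq ->]]; rewrite eqxx.
Qed.

Lemma ssum_set0 k : ssum set0 k.+1 = 0.
Proof.
rewrite /ssum big_pred0 // => X; rewrite subset0.
by case: eqP => // ->; rewrite cards0.
Qed.

Lemma ssumU1 (A : {set T}) (a : T) k : a \notin A ->
  ssum (a |: A) k.+1 = ssum A k.+1 + F a * ssum A k.
Proof.
move=> aA; rewrite /ssum (bigID (fun X : {set T} => a \in X)) /= addrC; congr (_ + _).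
  apply: eq_bigl => X; apply/idP/idP.
    case/andP=> /andP[sX cX] nX; rewrite cX andbT.
    apply/subsetP => x xX; have := subsetP sX x xX; rewrite !inE.
    by case/predU1P => [ex|//]; rewrite -ex xX in nX.
  case/andP=> sX ->; rewrite andbT; apply/andP; split.
    by apply: (subset_trans sX); apply: subsetUr.
  by apply/negP => /(subsetP sX); apply/negP.
rewrite big_distrr /=.
rewrite (reindex_onto (fun Y : {set T} => a |: Y) (fun X : {set T} => X :\ a)); last first.
  by move=> X /andP[_ aX]; rewrite setD1K.
apply: eq_big => Y.
  apply/idP/idP.
    case/andP=> /andP[/andP[sY cY] _] /eqP eY.
    have nY : a \notin Y by rewrite -eY setD11.
    rewrite cardsU1 nY /= add1n eqSS in cY; rewrite cY andbT.
    apply/subsetP => x xY; have := subsetP sY x; rewrite !inE xY orbT => /(_ isT).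
    by case/orP=> // /eqP ex; rewrite -ex xY in nY.
  case/andP=> sY cY.
  have nY : a \notin Y by apply/negP => /(subsetP sY); apply/negP.
  rewrite setU11 andbT cardsU1 nY add1n eqSS cY andbT setU1K // eqxx andbT.
  by apply: setUS.
case/andP=> _ /eqP eY.
have nY : a \notin Y by rewrite -eY setD11.
by rewrite big_setU1.
Qed.

Fixpoint esym (s : seq C) (k : nat) : C :=
  if k is k'.+1 then (if s is x :: s' then esym s' k + x * esym s' k' else 0) else 1.

Lemma ssum_seq (s : seq T) k : uniq s -> ssum [set:: s] k = esym (map F s) k.
Proof.
elim: s k => [|a s IH] k.
  by case: k => [|k] _; rewrite ?ssum0 // set_nil ssum_set0.
case/andP=> aS us; case: k => [|k]; first by rewrite ssum0.
by rewrite set_cons ssumU1 ?IH // inE.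
Qed.

End Subsets.


Lemma elv a : (a <= 10)%N -> nat_of_ord (el a) = a.-1.
Proof. by move=> h; rewrite /el inordK //; lia. Qed.
Lemma el_eq a b : (a <= 10)%N -> (b <= 10)%N -> (el a == el b) = (a.-1 == b.-1).
Proof. by move=> ha hb; rewrite -val_eqE /= !elv. Qed.

Definition N1 : {set 'I_10} := [set el 1; el 2; el 6].
Definition N2 : {set 'I_10} := [set el 3; el 4; el 6].

Lemma setU1_eq_gen (T : finType) (a : T) (X S : {set T}) : a \notin X ->
  (a |: X == S) = (a \in S) && (X == S :\ a).
Proof.
move=> aX; apply/eqP/andP => [<-|[aS /eqP ->]]; last by rewrite setD1K.
by rewrite setU11 setU1K.
Qed.

Lemma memM' X : (X \in delete (contract V10 (el 5)) (el 7)) =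
  [&& el 5 \notin X, el 7 \notin X, #|X| == 3, X != N1 & X != N2].
Proof.
rewrite /delete inE.
have -> : (X \in contract V10 (el 5)) = (el 5 \notin X) && (el 5 |: X \in V10).
  apply/idP/idP => [/imsetP[B]|/andP[nX VX]].
    rewrite inE => /andP[BV eB] ->.
    by rewrite setD11 setD1K.
  apply/imsetP; exists (el 5 |: X). rewrite inE VX setU11 //. by rewrite setU1K.
case nX: (el 5 \in X) => //=.
rewrite /V10 inE cardsU1 nX /= add1n eqSS /non_bases_V10 !inE.
rewrite !setU1_eq_gen ?nX //.
rewrite !inE !el_eq //=.
have -> : [set el 1; el 2; el 5; el 6] :\ el 5 = N1.
  apply/setP => i; rewrite !inE; case: (eqVneq i (el 5)) => [->|ne].
    by rewrite !el_eq.
  by rewrite ?(negPf ne) /= ?orbF.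
have -> : [set el 3; el 4; el 5; el 6] :\ el 5 = N2.
  apply/setP => i; rewrite !inE; case: (eqVneq i (el 5)) => [->|ne].
    by rewrite !el_eq.
  by rewrite ?(negPf ne) /= ?orbF.
case n7: (el 7 \in X); first by rewrite /= !andbF.
have -> : (X == [set el 5; el 6; el 7; el 8] :\ el 5) = false.
  by apply/negP => /eqP EX; move: n7; rewrite EX !inE !el_eq.
by case: (#|X| == 3); case: (X == N1); case: (X == N2).
Qed.

Definition s8 : seq 'I_10 := [:: el 1; el 2; el 3; el 4; el 6; el 8; el 9; el 10].

Lemma mem_s8 (i : 'I_10) : (i \in [set:: s8]) = (i != el 5) && (i != el 7).
Proof.
case: i => m Hm; rewrite !inE -!val_eqE /= !elv //.
by do 10! (case: m Hm => [|m] Hm //).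
Qed.

Lemma uniq_s8 : uniq s8.
Proof. by rewrite /s8 /= !inE !el_eq. Qed.

Lemma card3 (a b c : 'I_10) : a != b -> a != c -> b != c -> #|[set a; b; c]| = 3.
Proof.
move=> ab ac bc; rewrite -setUA cardsU1 cards2 bc !inE negb_or ab ac.
by [].
Qed.

Lemma sub_s8 (X : {set 'I_10}) : (X \subset [set:: s8]) = (el 5 \notin X) && (el 7 \notin X).
Proof.
apply/subsetP/andP => [H|[n5 n7] x xX].
  split; apply/negP => /H; by rewrite mem_s8 eqxx // andbF.
rewrite mem_s8; apply/andP; split; apply/negP => /eqP ex.
  by rewrite -ex xX in n5.
by rewrite -ex xX in n7.
Qed.

Lemma prod3 (C : comNzRingType) (F : 'I_10 -> C) (a b c : 'I_10) :
  a != b -> a != c -> b != c -> \prod_(i in [set a; b; c]) F i = F a * F b * F c.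
Proof.
move=> ab ac bc; rewrite -setUA big_setU1 /=; last by rewrite !inE negb_or ab ac.
by rewrite big_setU1 ?inE // big_set1 mulrA.
Qed.

Lemma sumM' (C : comNzRingType) (xi : 'I_10 -> C) :
 \sum_(B in delete (contract V10 (el 5)) (el 7)) \prod_(i in B) xi i =
 esym (map xi s8) 3%N - xi (el 1) * xi (el 2) * xi (el 6) - xi (el 3) * xi (el 4) * xi (el 6).
Proof.
have H0 := ssum_seq xi 3%N uniq_s8; rewrite /ssum in H0.
have N21 : N2 != N1.
  apply/negP => /eqP E; have : el 3 \in N1 by rewrite -E /N2 !inE eqxx.
  by rewrite /N1 !inE !el_eq.
rewrite (bigD1 N1) in H0; last by rewrite sub_s8 /N1 card3 ?el_eq // !inE !el_eq.
rewrite (bigD1 N2) in H0; last by rewrite N21 andbT sub_s8 /N2 card3 ?el_eq //= !inE !el_eq.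
transitivity (\sum_(X : {set 'I_10} | (X \subset [set:: s8]) && (#|X| == 3%N) && (X != N1) && (X != N2)) \prod_(i in X) xi i).
  by apply: eq_bigl => X; rewrite memM' sub_s8 -!andbA.
move: H0; rewrite /N1 /N2 !prod3 ?el_eq //= => <-.
ring.
Qed.

Section Core.
Variable R : rcfType.
Local Notation C := R[i].
Local Notation Im := (@complex.Im R).
Local Notation Re := (@complex.Re R).

Lemma ImD (a b : C) : Im (a + b) = Im a + Im b.
Proof. by case: a => ? ?; case: b => ? ?. Qed.

Lemma ImM (a b : C) : Im (a * b) = Re a * Im b + Im a * Re b.
Proof. by case: a => ? ?; case: b => ? ? /=. Qed.
Lemma ReM (a b : C) : Re (a * b) = Re a * Re b - Im a * Im b.
Proof. by case: a => ? ?; case: b => ? ? /=. Qed.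
Lemma ReD (a b : C) : Re (a + b) = Re a + Re b.
Proof. by case: a => ? ?; case: b => ? ?. Qed.
Lemma Im_div_ge0 (N D : C) : D != 0 -> 0 <= Im (N * conjc D) -> 0 <= Im (N / D).
Proof.
case: N => a b; case: D => c d /= D0 H.
have hD : 0 < c ^+ 2 + d ^+ 2.
  rewrite lt_def; apply/andP; split; last by rewrite addr_ge0 ?sqr_ge0.
  apply/negP => /eqP h; move/eqP: D0; apply.
  have hc : c = 0 by apply/eqP; rewrite -sqrf_eq0 eq_le sqr_ge0 andbT -h lerDl sqr_ge0.
  have hd : d = 0 by apply/eqP; rewrite -sqrf_eq0 eq_le sqr_ge0 andbT -h lerDr sqr_ge0.
  by rewrite hc hd.
have -> : a * - (d / (c ^+ 2 + d ^+ 2)) + b * (c / (c ^+ 2 + d ^+ 2)) =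
   (a * - d + b * c) / (c ^+ 2 + d ^+ 2) by field; rewrite gt_eqF.
by rewrite divr_ge0 // ltW.
Qed.

Lemma Im_gf (s x : C) : 0 <= Im s -> 0 < Im x -> 0 <= Im (s * x * conjc (s + s + x)).
Proof.
case: s => a b; case: x => c d /= hb hd.
nra.
Qed.

Lemma Im_g34 (s x y : C) : 0 <= Im s -> 0 < Im x -> 0 < Im y ->
  0 <= Im ((x * y + x * y + s * (x + y)) * conjc (s + s + x + y)).
Proof.
move=> hs hx hy.
have -> : Im ((x * y + x * y + s * (x + y)) * conjc (s + s + x + y)) =
  2%:R * Im x * ((Re y + Re s)^+2 + (Im y + Im s)^+2) +
  2%:R * Im y * ((Re x + Re s)^+2 + (Im x + Im s)^+2) +
  Im s * ((Re x - Re y)^+2 + (Im x - Im y)^+2).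
  by case: s {hs} => a b; case: x {hx} => c d; case: y {hy} => e f /=; ring.
by do ![assumption|apply: sqr_ge0|apply: addr_ge0|apply: mulr_ge0|apply: ler0n|apply: ltW].
Qed.

Lemma e2_ne0 (y1 y2 e : C) : 0 < Im y1 -> 0 < Im y2 -> 0 < Im e ->
  y1 * y2 + e * (y1 + y2) != 0.
Proof.
move=> h1 h2 h3; apply/negP => /eqP Z0.
have key : Im ((y1 * y2 + e * (y1 + y2)) * conjc (y1 + y2)) =
  Im y1 * (Re y2 ^+ 2 + Im y2 ^+ 2) + Im y2 * (Re y1 ^+ 2 + Im y1 ^+ 2) +
  Im e * ((Re y1 + Re y2) ^+ 2 + (Im y1 + Im y2) ^+ 2).
  by case: y1 {h1 Z0} => a b; case: y2 {h2} => c d; case: e {h3} => p q /=; ring.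
move: key; rewrite Z0 mul0r /= => key.
have A1 : 0 <= Im y1 * (Re y2 ^+ 2 + Im y2 ^+ 2).
  by apply: mulr_ge0; [exact: ltW | by rewrite addr_ge0 ?sqr_ge0].
have A3 : 0 <= Im e * ((Re y1 + Re y2) ^+ 2 + (Im y1 + Im y2) ^+ 2).
  by apply: mulr_ge0; [exact: ltW | by rewrite addr_ge0 ?sqr_ge0].
have B : 0 < Re y1 ^+ 2 + Im y1 ^+ 2.
  by apply: ltr_wpDl; [exact: sqr_ge0 | exact: exprn_gt0].
have A2 : 0 < Im y2 * (Re y1 ^+ 2 + Im y1 ^+ 2) by apply: mulr_gt0.
lra.
Qed.
Definition noUH (p : {poly C}) := forall z : C, 0 <= Im z -> p.[z] != 0.

Lemma ImB (a b : C) : Im (a - b) = Im a - Im b.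
Proof. by case: a => ? ?; case: b => ? ?. Qed.

Lemma Im_inv_neg (u : C) : 0 < Im u -> Im (u^-1) < 0.
Proof.
case: u => a b /= hb.
rewrite oppr_lt0 divr_gt0 //.
by apply: ltr_wpDl; [exact: sqr_ge0 | exact: exprn_gt0].
Qed.

Lemma Im_ne0 (u : C) : Im u != 0 -> u != 0.
Proof. by apply: contraNneq => ->. Qed.

Lemma logder (r : seq C) (z0 : C) : (forall z, z \in r -> Im z < 0) -> 0 <= Im z0 ->
  let q := \prod_(z <- r) ('X - z%:P) in
  q.[z0] != 0 /\ Im (q^`().[z0] / q.[z0]) <= 0 /\ (r != [::] -> Im (q^`().[z0] / q.[z0]) < 0).
Proof.
move=> Hr hz; elim: r Hr => [|a r IH] Hr /=.
  by rewrite big_nil derivC horner0 mul0r hornerC oner_neq0.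
have [qn0 [le _]] : _ := IH (fun z zr => Hr z (@mem_behead _ (a :: r) z zr)).
have ha : 0 < Im (z0 - a) by rewrite ImB subr_gt0 (lt_le_trans (Hr a (mem_head _ _))).
have za : z0 - a != 0 by apply: Im_ne0; rewrite gt_eqF.
rewrite big_cons derivM derivXsubC mul1r !hornerE.
set Q := (\prod_(j <- r) ('X - j%:P)) in qn0 le *.
have -> : (Q.[z0] + (z0 - a) * Q^`().[z0]) / ((z0 - a) * Q.[z0]) =
   (z0 - a)^-1 + Q^`().[z0] / Q.[z0] by field; apply/andP.
have lt : Im ((z0 - a)^-1 + Q^`().[z0] / Q.[z0]) < 0.
  by rewrite ImD; have := Im_inv_neg ha; lra.
by rewrite mulf_neq0 // ltW.
Qed.

Lemma GL (p : {poly C}) : (1 < size p)%N -> noUH p -> noUH p^`().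
Proof.
move=> sp H z0 hz.
have [r Hr] := closed_field_poly_normal p.
have pn0 : p != 0 by rewrite -size_poly_gt0 (ltn_trans _ sp).
have lc : lead_coef p != 0 by rewrite lead_coef_eq0.
have rneg : forall z, z \in r -> Im z < 0.
  move=> z zr; rewrite ltNge; apply/negP => hz'.
  have := H z hz'; rewrite Hr hornerZ mulf_eq0 negb_or lc /=.
  by rewrite -/(root _ z) root_prod_XsubC zr.
have rne : r != [::].
  apply/negP => /eqP r0; move: sp; rewrite Hr r0 big_nil size_scale // size_poly1.
  by [].
have [qn0 [_ lt]] := logder rneg hz.
have := lt rne; rewrite Hr derivZ hornerZ mulf_eq0 negb_or lc /=.
apply: contraTN => /eqP ->; rewrite mul0r; lra.
Qed.


Variables (x1 x2 x3 x4 x6 x8 x9 x10 : C).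

Definition c0 : C := 4%:R * x2 * x4 * x6 * x8 * x9 * x10 + 4%:R * x2 * x3 * x6 * x8 * x9 * x10 + 4%:R * x2 * x3 * x4 * x8 * x9 * x10 + 4%:R * x1 * x4 * x6 * x8 * x9 * x10 + 4%:R * x1 * x3 * x6 * x8 * x9 * x10 + 4%:R * x1 * x3 * x4 * x8 * x9 * x10 + 4%:R * x1 * x2 * x4 * x8 * x9 * x10 + 4%:R * x1 * x2 * x3 * x8 * x9 * x10.
Definition c1 : C := 8%:R * x4 * x6 * x8 * x9 * x10 + 8%:R * x3 * x6 * x8 * x9 * x10 + 8%:R * x3 * x4 * x8 * x9 * x10 + 8%:R * x2 * x6 * x8 * x9 * x10 + 12%:R * x2 * x4 * x8 * x9 * x10 + 8%:R * x2 * x4 * x6 * x9 * x10 + 8%:R * x2 * x4 * x6 * x8 * x10 + 8%:R * x2 * x4 * x6 * x8 * x9 + 12%:R * x2 * x3 * x8 * x9 * x10 + 8%:R * x2 * x3 * x6 * x9 * x10 + 8%:R * x2 * x3 * x6 * x8 * x10 + 8%:R * x2 * x3 * x6 * x8 * x9 + 8%:R * x2 * x3 * x4 * x9 * x10 + 8%:R * x2 * x3 * x4 * x8 * x10 + 8%:R * x2 * x3 * x4 * x8 * x9 + 8%:R * x1 * x6 * x8 * x9 * x10 + 12%:R * x1 * x4 * x8 * x9 * x10 + 8%:R * x1 * x4 * x6 * x9 * x10 + 8%:R * x1 * x4 * x6 * x8 * x10 + 8%:R * x1 * x4 * x6 * x8 * x9 + 12%:R * x1 * x3 * x8 * x9 *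 x10 + 8%:R * x1 * x3 * x6 * x9 * x10 + 8%:R * x1 * x3 * x6 * x8 * x10 + 8%:R * x1 * x3 * x6 * x8 * x9 + 8%:R * x1 * x3 * x4 * x9 * x10 + 8%:R * x1 * x3 * x4 * x8 * x10 + 8%:R * x1 * x3 * x4 * x8 * x9 + 8%:R * x1 * x2 * x8 * x9 * x10 + 8%:R * x1 * x2 * x4 * x9 * x10 + 8%:R * x1 * x2 * x4 * x8 * x10 + 8%:R * x1 * x2 * x4 * x8 * x9 + 8%:R * x1 * x2 * x3 * x9 * x10 + 8%:R * x1 * x2 * x3 * x8 * x10 + 8%:R * x1 * x2 * x3 * x8 * x9.
Definition c2 : C := 16%:R * x6 * x8 * x9 * x10 + 20%:R * x4 * x8 * x9 * x10 + 16%:R * x4 * x6 * x9 * x10 + 16%:R * x4 * x6 * x8 * x10 + 16%:R * x4 * x6 * x8 * x9 + 20%:R * x3 * x8 * x9 * x10 + 16%:R * x3 * x6 * x9 * x10 + 16%:R * x3 * x6 * x8 * x10 + 16%:R * x3 * x6 * x8 * x9 + 16%:R * x3 * x4 * x9 * x10 + 16%:R * x3 * x4 * x8 * x10 + 16%:R * x3 * x4 * x8 * x9 + 20%:R * x2 * x8 * x9 * x10 + 16%:R * x2 * x6 * x9 * x10 + 16%:R * x2 * x6 * x8 * x10 + 16%:R * x2 * x6 * x8 * x9 + 20%:R * x2 * x4 * x9 * x10 + 20%:R * x2 * x4 * x8 * x10 + 20%:R * x2 * x4 * x8 * x9 + 16%:R * x2 * x4 * x6 * x10 + 16%:R * x2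 * x4 * x6 * x9 + 16%:R * x2 * x4 * x6 * x8 + 20%:R * x2 * x3 * x9 * x10 + 20%:R * x2 * x3 * x8 * x10 + 20%:R * x2 * x3 * x8 * x9 + 16%:R * x2 * x3 * x6 * x10 + 16%:R * x2 * x3 * x6 * x9 + 16%:R * x2 * x3 * x6 * x8 + 16%:R * x2 * x3 * x4 * x10 + 16%:R * x2 * x3 * x4 * x9 + 16%:R * x2 * x3 * x4 * x8 + 20%:R * x1 * x8 * x9 * x10 + 16%:R * x1 * x6 * x9 * x10 + 16%:R * x1 * x6 * x8 * x10 + 16%:R * x1 * x6 * x8 * x9 + 20%:R * x1 * x4 * x9 * x10 + 20%:R * x1 * x4 * x8 * x10 + 20%:R * x1 * x4 * x8 * x9 + 16%:R * x1 * x4 * x6 * x10 + 16%:R * x1 * x4 * x6 * x9 + 16%:R * x1 * x4 * x6 * x8 + 20%:R * x1 * x3 * x9 * x10 + 20%:R * x1 * x3 * x8 * x10 + 20%:R * x1 * x3 * x8 * x9 + 16%:R * x1 * x3 * x6 * x10 + 16%:R * x1 * x3 * x6 * x9 + 16%:R * x1 * x3 * x6 * x8 + 16%:R * x1 * x3 * x4 * x10 + 16%:R * x1 * x3 * x4 * x9 + 16%:R * x1 * x3 * x4 * x8 + 16%:R * x1 * x2 * x9 * x10 + 16%:R * x1 * x2 * x8 * x10 + 16%:R * x1 * x2 * x8 * x9 + 16%:R * x1 * x2 * x4 * x10 + 16%:R * x1 * x2 * x4 * x9 + 16%:R * x1 * x2 * x4 * x8 + 16%:R * x1 * x2 * x3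 * x10 + 16%:R * x1 * x2 * x3 * x9 + 16%:R * x1 * x2 * x3 * x8.
Definition c3 : C := 32%:R * x8 * x9 * x10 + 32%:R * x6 * x9 * x10 + 32%:R * x6 * x8 * x10 + 32%:R * x6 * x8 * x9 + 32%:R * x4 * x9 * x10 + 32%:R * x4 * x8 * x10 + 32%:R * x4 * x8 * x9 + 32%:R * x4 * x6 * x10 + 32%:R * x4 * x6 * x9 + 32%:R * x4 * x6 * x8 + 32%:R * x3 * x9 * x10 + 32%:R * x3 * x8 * x10 + 32%:R * x3 * x8 * x9 + 32%:R * x3 * x6 * x10 + 32%:R * x3 * x6 * x9 + 32%:R * x3 * x6 * x8 + 32%:R * x3 * x4 * x10 + 32%:R * x3 * x4 * x9 + 32%:R * x3 * x4 * x8 + 32%:R * x2 * x9 * x10 + 32%:R * x2 * x8 * x10 + 32%:R * x2 * x8 * x9 + 32%:R * x2 * x6 * x10 + 32%:R * x2 * x6 * x9 + 32%:R * x2 * x6 * x8 + 32%:R * x2 * x4 * x10 + 32%:R * x2 * x4 * x9 + 32%:R * x2 * x4 * x8 + 32%:R * x2 * x4 * x6 + 32%:R * x2 * x3 * x10 + 32%:R * x2 * x3 * x9 + 32%:R * x2 * x3 * x8 + 32%:R * x2 * x3 * x6 + 32%:R * x2 * x3 * x4 + 32%:R * x1 * x9 * x10 + 32%:R * x1 * x8 * x10 + 32%:R * x1 * x8 * x9 + 32%:R * x1 * x6 * x10 + 32%:R * x1 * x6 * x9 + 32%:R * x1 * x6 * x8 + 32%:R * x1 * x4 * x10 + 32%:R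 * x1 * x4 * x9 + 32%:R * x1 * x4 * x8 + 32%:R * x1 * x4 * x6 + 32%:R * x1 * x3 * x10 + 32%:R * x1 * x3 * x9 + 32%:R * x1 * x3 * x8 + 32%:R * x1 * x3 * x6 + 32%:R * x1 * x3 * x4 + 32%:R * x1 * x2 * x10 + 32%:R * x1 * x2 * x9 + 32%:R * x1 * x2 * x8 + 32%:R * x1 * x2 * x4 + 32%:R * x1 * x2 * x3.
Definition c4 : C := 48%:R * x9 * x10 + 48%:R * x8 * x10 + 48%:R * x8 * x9 + 64%:R * x6 * x10 + 64%:R * x6 * x9 + 64%:R * x6 * x8 + 48%:R * x4 * x10 + 48%:R * x4 * x9 + 48%:R * x4 * x8 + 64%:R * x4 * x6 + 48%:R * x3 * x10 + 48%:R * x3 * x9 + 48%:R * x3 * x8 + 64%:R * x3 * x6 + 64%:R * x3 * x4 + 48%:R * x2 * x10 + 48%:R * x2 * x9 + 48%:R * x2 * x8 + 64%:R * x2 * x6 + 48%:R * x2 * x4 + 48%:R * x2 * x3 + 48%:R * x1 * x10 + 48%:R * x1 * x9 + 48%:R * x1 * x8 + 64%:R * x1 * x6 + 48%:R * x1 * x4 + 48%:R * x1 * x3 + 64%:R * x1 * x2.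
Definition c5 : C := 64%:R * x10 + 64%:R * x9 + 64%:R * x8 + 128%:R * x6 + 64%:R * x4 + 64%:R * x3 + 64%:R * x2 + 64%:R * x1.
Definition c6 : C := 64%:R * 1.

Definition cf (i : nat) : C :=
  match i with 0 => c0 | 1 => c1 | 2 => c2 | 3 => c3 | 4 => c4 | 5 => c5 | _ => c6 end.
Definition Qp : {poly C} := \poly_(i < 7) cf i.

Definition d34 (s : C) := s + s + x3 + x4.
Definition df (x s : C) := s + s + x.
Definition RHSQ (s : C) :=
  d34 s * df x8 s * df x9 s * df x10 s *
   (4%:R * (s + x1) * (s + x2) + (x3 + x4 + x8 + x9 + x10 + 4%:R * x6) * (s + s + x1 + x2))
  - (s + s + x1 + x2) * ((x3 - x4)^+2 * df x8 s * df x9 s * df x10 s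
     + x8^+2 * d34 s * df x9 s * df x10 s + x9^+2 * d34 s * df x8 s * df x10 s
     + x10^+2 * d34 s * df x8 s * df x9 s).

Lemma Qp_horner s : Qp.[s] = RHSQ s.
Proof.
rewrite /Qp horner_poly !big_ord_recr big_ord0 /= /RHSQ /d34 /df /c0 /c1 /c2 /c3 /c4 /c5 /c6.
ring.
Qed.

Lemma Qp_noUH : 0 < Im x1 -> 0 < Im x2 -> 0 < Im x3 -> 0 < Im x4 -> 0 < Im x6 ->
  0 < Im x8 -> 0 < Im x9 -> 0 < Im x10 -> noUH Qp.
Proof.
move=> h1 h2 h3 h4 h6 h8 h9 h10 s hs; rewrite Qp_horner.
have Hdf : forall x, 0 < Im x -> 0 < Im (df x s).
  by move=> x hx; rewrite /df !ImD; lra.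
have H34 : 0 < Im (d34 s) by rewrite /d34 !ImD; lra.
have nz : forall u : C, 0 < Im u -> u != 0 by move=> u hu; apply: Im_ne0; rewrite gt_eqF.
have n34 := nz _ H34; have n8 := nz _ (Hdf _ h8); have n9 := nz _ (Hdf _ h9);
  have n10 := nz _ (Hdf _ h10).
set E := x6 + x6 + (x3 * x4 + x3 * x4 + s * (x3 + x4)) / d34 s + s * x8 / df x8 s
   + s * x9 / df x9 s + s * x10 / df x10 s.
have -> : RHSQ s = d34 s * df x8 s * df x9 s * df x10 s *
   ((s + x1 + (s + x1)) * (s + x2 + (s + x2)) + E * ((s + x1 + (s + x1)) + (s + x2 + (s + x2)))).
  rewrite /RHSQ /E; move: n34 n8 n9 n10; rewrite /d34 /df => n34 n8 n9 n10.
  by field; rewrite n34 n8 n9 n10.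
rewrite !mulf_neq0 //; apply: e2_ne0; rewrite ?ImD; try lra.
have g34 : 0 <= Im ((x3 * x4 + x3 * x4 + s * (x3 + x4)) / d34 s).
  by apply: Im_div_ge0 => //; apply: Im_g34.
have gf : forall x, 0 < Im x -> 0 <= Im (s * x / df x s).
  by move=> x hx; apply: Im_div_ge0; [apply: nz; apply: Hdf | apply: Im_gf].
have := gf _ h8; have := gf _ h9; have := gf _ h10; lra.
Qed.

Lemma coef_size (p : {poly C}) j : p`_j != 0 -> (j < size p)%N.
Proof. by apply: contraR; rewrite -leqNgt => /(nth_default 0) ->. Qed.

Lemma c6_ne0 : c6 != 0.
Proof. by rewrite /c6 mulr1 pnatr_eq0. Qed.

Lemma c3_ne0 : 0 < Im x1 -> 0 < Im x2 -> 0 < Im x3 -> 0 < Im x4 -> 0 < Im x6 ->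
  0 < Im x8 -> 0 < Im x9 -> 0 < Im x10 -> c3 != 0.
Proof.
move=> h1 h2 h3 h4 h6 h8 h9 h10.
have N0 := Qp_noUH h1 h2 h3 h4 h6 h8 h9 h10.
have N1 : noUH Qp^`().
  apply: GL => //; apply: (@leq_trans 7) => //; apply: coef_size.
  by rewrite /Qp coef_poly [cf _]/= c6_ne0.
have N2 : noUH Qp^`()^`().
  apply: GL => //; apply: (@leq_trans 6) => //; apply: coef_size.
  by rewrite coef_deriv /Qp coef_poly [cf _]/= mulrn_eq0 c6_ne0.
have N3 : noUH Qp^`()^`()^`().
  apply: GL => //; apply: (@leq_trans 5) => //; apply: coef_size.
  by rewrite !coef_deriv /Qp coef_poly [cf _]/= !mulrn_eq0 c6_ne0.
have E3 : forall p : {poly C}, p^`()^`()^`() = p^`(3) by move=> p; rewrite !derivnS derivn0.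
have I0 : 0 <= Im 0 by rewrite lexx.
have := N3 0 I0.
rewrite horner_coef0 E3 coef_derivn /Qp coef_poly.
rewrite [cf _]/=.
by rewrite mulrn_eq0.
Qed.

End Core.

Lemma main_nonvanish (R : rcfType) (xi : 'I_10 -> R[i]) :
  (forall i, 0 < complex.Im (xi i)) ->
  \sum_(B in delete (contract V10 (el 5)) (el 7)) \prod_(i in B) xi i != 0.
Proof.
move=> H; rewrite sumM'.
have := c3_ne0 (H (el 1)) (H (el 2)) (H (el 3)) (H (el 4)) (H (el 6)) (H (el 8))
  (H (el 9)) (H (el 10)).
apply: contraNN => /eqP E.
suff -> : c3 (xi (el 1)) (xi (el 2)) (xi (el 3)) (xi (el 4)) (xi (el 6)) (xi (el 8))
  (xi (el 9)) (xi (el 10)) =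
  32%:R * (esym [seq xi i | i <- s8] 3 - xi (el 1) * xi (el 2) * xi (el 6) -
     xi (el 3) * xi (el 4) * xi (el 6)) by rewrite E mulr0.
rewrite /c3 /=; ring.
Qed.

Theorem lemma4p2 (R : realType) :
  half_plane_property R (delete (contract V10 (el 5)) (el 7)).
Proof.
apply: hpp_of_nonvanish => xi H.
exact: main_nonvanish.
Qed.
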